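(* Let $\mathbb F$ be a field and let $P(s)\in\mathbb F[s]^{p\times q}$ be a matrix pencil of rank $1$. 1. If $P(s)$ has a nontrivial invariant factor, then there exist nonzero vectors $u\in\mathbb F^p$, $\bar v\in\mathbb F^q$ and nonzero pencils $\bar u(s)\in\mathbb F[s]^p$, $v(s)\in\mathbb F[s]^q$ such that $P(s)=uv(s)^T=\bar u(s)\bar v^T$. 2. If $P(s)$ has an infinite elementary divisor, then there exist nonzero vectors $u\in\mathbb F^p$, $v\in\mathbb F^q$ such that $P(s)=uv^T$. 3. If $P(s)$ has a positive column minimal index, then there exist a nonzero vector $u\in\mathbb F^p$ and a nonzero pencil $v(s)\in\mathbb F[s]^q$ such that $P(s)=uv(s)^T$. 4. If $P(s)$ has a positive row minimal index, then there exist a nonzero vector $v\in\mathbb F^q$ and a nonzero pencil $u(s)\in\mathbb F[s]^p$ such that $P(s)=u(s)v^T$.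
   Context: A matrix pencil is a polynomial matrix of degree at most $1$, $G(s)=G_0+sG_1$; a vector pencil in $\mathbb F[s]^p$ is a column vector of degree at most $1$. The rank of a pencil is its normal rank. Its Kronecker invariants (complete invariants under strict equivalence $G\mapsto QGR$, $Q,R$ invertible constant matrices) are the invariant factors (monic polynomials in $\mathbb F[s]$; ''nontrivial'' means of positive degree), the infinite elementary divisors $t^{k}$ with $k>0$, and the column and row minimal indices. *)

(* Defs.v *)
From HB Require Import structures.
From mathcomp Require Import all_boot all_order all_algebra.
Set Implicit Arguments. Unset Strict Implicit. Unset Printing Implicit Defensive.
Import Order.TTheory GRing.Theory Num.Theory.
Local Open Scope ring_scope.

Section Pencils.
Variable F : fieldType.
Local Notation P_ := {poly F}.

Definition is_pencil (p q : nat) (P : 'M[P_]_(p, q)) : Prop :=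
  forall i j, (size (P i j) <= 2)%N.

Definition nrank (p q : nat) (P : 'M[P_]_(p, q)) : nat :=
  \rank (map_mx (@tofrac P_) P).

Definition minor (p q k : nat) (P : 'M[P_]_(p, q))
  (f : {ffun 'I_k -> 'I_p}) (g : {ffun 'I_k -> 'I_q}) : P_ :=
  \det (\matrix_(i < k, j < k) P (f i) (g j)).

Definition monicize (d : P_) : P_ := if d == 0 then 0 else (lead_coef d)^-1 *: d.

(* k-th determinantal divisor: monic gcd of all k x k minors (D_0 = 1). *)
Definition detdiv (p q : nat) (P : 'M[P_]_(p, q)) (k : nat) : P_ :=
  monicize (\big[@gcdp F/0]_(f : {ffun 'I_k -> 'I_p})
              \big[@gcdp F/0]_(g : {ffun 'I_k -> 'I_q}) minor P f g).

(* k-th invariant factor (1 <= k <= nrank P): D_k / D_(k-1). *)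
Definition inv_factor (p q : nat) (P : 'M[P_]_(p, q)) (k : nat) : P_ :=
  detdiv P k %/ detdiv P k.-1.

Definition has_nontrivial_inv_factor (p q : nat) (P : 'M[P_]_(p, q)) : Prop :=
  exists k, (0 < k <= nrank P)%N /\ (1 < size (inv_factor P k))%N.

Definition pencil_rev (p q : nat) (P : 'M[P_]_(p, q)) : 'M[P_]_(p, q) :=
  \matrix_(i, j) (((P i j)`_(1%N))%:P + (P i j)`_(0%N) *: 'X).

(* Infinite elementary divisors t^k (k > 0) of P are the elementary divisors
   at the eigenvalue 0 of the reversal of P. *)
Definition has_infinite_elem_div (p q : nat) (P : 'M[P_]_(p, q)) : Prop :=
  exists k, (0 < k <= nrank (pencil_rev P))%N /\ root (inv_factor (pencil_rev P) k) 0.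

Definition col_deg (m n : nat) (B : 'M[P_]_(m, n)) (j : 'I_n) : nat :=
  \max_(i < m) (size (B i j)).-1.

Definition right_poly_basis (p q : nat) (P : 'M[P_]_(p, q))
  (B : 'M[P_]_(q, q - nrank P)) : Prop :=
  P *m B = 0 /\ \rank (map_mx (@tofrac P_) B) = (q - nrank P)%N.

Definition right_minimal_basis (p q : nat) (P : 'M[P_]_(p, q))
  (B : 'M[P_]_(q, q - nrank P)) : Prop :=
  right_poly_basis B /\
  forall B' : 'M[P_]_(q, q - nrank P), right_poly_basis B' ->
    (\sum_j col_deg B j <= \sum_j col_deg B' j)%N.

(* Column minimal indices = column degrees of a minimal basis of the right
   null space; row minimal indices = those of the left null space (of P^T). *)
Definition has_pos_col_min_index (p q : nat) (P : 'M[P_]_(p, q)) : Prop :=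
  exists B, @right_minimal_basis p q P B /\ exists j, (0 < col_deg B j)%N.

Definition has_pos_row_min_index (p q : nat) (P : 'M[P_]_(p, q)) : Prop :=
  has_pos_col_min_index P^T.

End Pencils.

(* Main.v *)
Require Import Defs.
From HB Require Import structures.
From mathcomp Require Import all_boot all_order all_algebra.
Set Implicit Arguments. Unset Strict Implicit. Unset Printing Implicit Defensive.
Import Order.TTheory GRing.Theory Num.Theory.
Local Open Scope ring_scope.

Section S.
Variable F : fieldType.
Local Notation P_ := {poly F}.

Lemma rank1_id (p q : nat) (P : 'M[P_]_(p, q)) : nrank P = 1%N ->
  forall i j k l, P i j * P k l = P i l * P k j.
Proof.
rewrite /nrank => Hr i j k l.
have := mulmx_base (map_mx (@tofrac P_) P).
move: (col_base _) (row_base _); rewrite Hr => X Y HXY.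
apply/eqP; rewrite -tofrac_eq !tofracM.
have E : forall a b, tofrac (P a b) = X a 0 * Y 0 b.
  by move=> a b; move/matrixP: HXY => /(_ a b); rewrite !mxE big_ord1 => ->.
by rewrite !E; apply/eqP; rewrite mulrACA [in RHS]mulrACA [Y 0 l * _]mulrC.
Qed.

Lemma rank1_neq0 (p q : nat) (P : 'M[P_]_(p, q)) : nrank P = 1%N ->
  exists i j, P i j != 0.
Proof.
rewrite /nrank => Hr.
case: (boolP [exists i, exists j, P i j != 0]).
  by move/existsP=> [i /existsP [j H]]; exists i, j.
rewrite negb_exists => /forallP H.
have P0 : P = 0.
  apply/matrixP=> i j; have := H i; rewrite negb_exists => /forallP /(_ j).
  by rewrite negbK mxE => /eqP.
by move: Hr; rewrite P0 map_mx0 mxrank0.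
Qed.
Definition inFe (e x : P_) := x == (lead_coef x / lead_coef e) *: e.

Lemma inFe0 e : inFe e 0.
Proof. by rewrite /inFe lead_coef0 mul0r scale0r. Qed.

Lemma F1 (e x : P_) : size e = 1%N -> (size x <= 1)%N -> inFe e x.
Proof.
move=> /eqP/size_poly1P [d d0 ->] /size1_polyC ->.
by rewrite /inFe !lead_coefC -mul_polyC -polyCM divfK.
Qed.

Lemma lin_form (x : P_) r : size x = 2%N -> root x r -> x = lead_coef x *: ('X - r%:P).
Proof.
move=> Hs /factor_theorem [q Hq].
have q0 : q != 0 by apply: contra_eqN Hs => /eqP q0; rewrite Hq q0 mul0r size_poly0.
have : size q = 1%N.
  move: Hs; rewrite Hq size_mul // ?polyXsubC_eq0 // size_XsubC addn2 /=.
  by case.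
move/eqP/size_poly1P => [c c0 Hc].
by rewrite Hq Hc lead_coefM lead_coefXsubC mulr1 lead_coefC mul_polyC.
Qed.

Lemma F2 (e x : P_) r : size e = 2%N -> root e r -> (size x <= 2)%N -> root x r -> inFe e x.
Proof.
move=> He Hre Hx Hrx.
have [->|x0] := eqVneq x 0; first exact: inFe0.
have Hx2 : size x = 2%N.
  move: Hx; rewrite leq_eqVlt ltnS => /orP [/eqP //|Hx1].
  move: Hrx; rewrite (size1_polyC Hx1) /root hornerC => /eqP c0.
  by move: x0; rewrite (size1_polyC Hx1) c0 eqxx.
have le0 : lead_coef e != 0 by rewrite lead_coef_eq0 -size_poly_eq0 He.
rewrite /inFe; set c := lead_coef x; set d := lead_coef e.
apply/eqP; rewrite {1}(lin_form Hx2 Hrx) -/c (lin_form He Hre) -/d scalerA divfK //.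
Qed.

Lemma root2 (e : P_) : size e = 2%N -> root e (- e`_0 / e`_1).
Proof.
move=> He; rewrite /root horner_coef He big_ord_recl big_ord1 /=.
have e1 : e`_1 != 0.
  by have := lead_coef_eq0 e; rewrite lead_coefE He /= -size_poly_eq0 He => ->.
by rewrite expr0 mulr1 expr1 mulrC divfK // addrN.
Qed.

Lemma dichot (e x y z : P_) : e != 0 -> (size e <= 2)%N -> (size x <= 2)%N -> (size y <= 2)%N ->
  (size z <= 2)%N -> e * z = x * y -> inFe e x || inFe e y.
Proof.
move=> e0 He Hx Hy Hz Hm.
have : size e = 1%N \/ size e = 2%N.
  move: He e0; rewrite -size_poly_eq0; case: (size e) => [|[|[|]]] //; by auto.
case=> Hse.
  apply/negPn/negP; rewrite negb_or => /andP [nx ny].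
  have sx : size x = 2%N.
    move: Hx; rewrite leq_eqVlt ltnS => /orP [/eqP //|H]; by rewrite (F1 Hse H) in nx.
  have sy : size y = 2%N.
    move: Hy; rewrite leq_eqVlt ltnS => /orP [/eqP //|H]; by rewrite (F1 Hse H) in ny.
  have := size_polyMleq e z; rewrite Hm size_mul -?size_poly_eq0 ?sx ?sy // Hse /=.
  by rewrite ltnNge Hz.
have Hr := root2 Hse.
have : root (x * y) (- e`_0 / e`_1) by rewrite -Hm /root hornerM (eqP Hr) mul0r.
rewrite /root hornerM mulf_eq0 => /orP [H|H].
  by rewrite (F2 Hse Hr Hx H).
by rewrite (F2 Hse Hr Hy H) orbT.
Qed.

Definition rk1 (p q : nat) (P : 'M[P_]_(p, q)) :=
  forall i j k l, P i j * P k l = P i l * P k j.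

Lemma caseA (p q : nat) (P : 'M[P_]_(p, q)) i0 j0 : rk1 P -> P i0 j0 != 0 ->
  (forall i, inFe (P i0 j0) (P i j0)) ->
  P = map_mx polyC (\col_i (lead_coef (P i j0) / lead_coef (P i0 j0))) *m (\col_j P i0 j)^T.
Proof.
move=> Hid e0 HA; apply/matrixP => i j; rewrite !mxE big_ord1 !mxE.
apply: (mulfI e0); rewrite mulrC Hid {1}(eqP (HA i)) -mul_polyC.
by rewrite -mulrA mulrCA.
Qed.

Lemma rk1_tr (p q : nat) (P : 'M[P_]_(p, q)) : rk1 P -> rk1 P^T.
Proof. by move=> H i j k l; rewrite !mxE mulrC H mulrC. Qed.

Lemma caseB (p q : nat) (P : 'M[P_]_(p, q)) i0 j0 : rk1 P -> P i0 j0 != 0 ->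
  (forall j, inFe (P i0 j0) (P i0 j)) ->
  P = (\col_i P i j0) *m (map_mx polyC (\col_j (lead_coef (P i0 j) / lead_coef (P i0 j0))))^T.
Proof.
move=> Hid e0 HB.
have e0' : P^T j0 i0 != 0 by rewrite mxE.
have HB' : forall j, inFe (P^T j0 i0) (P^T j i0) by move=> j; rewrite !mxE.
have := caseA (rk1_tr Hid) e0' HB'.
move/(congr1 trmx); rewrite trmxK trmx_mul trmxK => HP.
rewrite {1}HP; congr (_ *m _); apply/matrixP => a b; rewrite !mxE //.
Qed.

Lemma dichotP (p q : nat) (P : 'M[P_]_(p, q)) i0 j0 : is_pencil P -> rk1 P -> P i0 j0 != 0 ->
  (forall i, inFe (P i0 j0) (P i j0)) \/ (forall j, inFe (P i0 j0) (P i0 j)).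
Proof.
move=> Hp Hid e0.
case: (boolP [forall i, inFe (P i0 j0) (P i j0)]) => [/forallP H|]; first by left.
rewrite negb_forall => /existsP [i1 Hi1].
right => j; apply/negPn/negP => Hj.
have := dichot e0 (Hp i0 j0) (Hp i1 j0) (Hp i0 j) (Hp i1 j).
by rewrite mulrC Hid mulrC (negbTE Hi1) (negbTE Hj) => /(_ erefl).
Qed.

Lemma big_gcd_dvd (I : finType) (G : I -> P_) i : \big[@gcdp F/0]_(j : I) G j %| G i.
Proof.
have : i \in index_enum I by rewrite mem_index_enum.
elim: (index_enum I) => //= x r IH; rewrite big_cons in_cons => /orP [/eqP ->|H].
  exact: dvdp_gcdl.
exact: dvdp_trans (dvdp_gcdr _ _) (IH H).
Qed.

Lemma big_gcd_neq0 (I : finType) (G : I -> P_) i : G i != 0 -> \big[@gcdp F/0]_(j : I) G j != 0.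
Proof.
move=> Gi; have : i \in index_enum I by rewrite mem_index_enum.
elim: (index_enum I) => //= x r IH; rewrite big_cons in_cons gcdp_eq0 negb_and => /orP [/eqP <-|H].
  by rewrite Gi.
by rewrite IH // orbT.
Qed.

Definition bigG (p q : nat) (P : 'M[P_]_(p, q)) :=
  \big[@gcdp F/0]_(f : {ffun 'I_1 -> 'I_p})
              \big[@gcdp F/0]_(g : {ffun 'I_1 -> 'I_q}) minor P f g.

Lemma minor1 (p q : nat) (P : 'M[P_]_(p, q)) i j : minor P [ffun _ : 'I_1 => i] [ffun _ : 'I_1 => j] = P i j.
Proof. by rewrite /minor det_mx11 !mxE !ffunE. Qed.

Lemma D1_dvd (p q : nat) (P : 'M[P_]_(p, q)) i j : bigG P %| P i j.
Proof.
rewrite -minor1; apply: dvdp_trans (big_gcd_dvd _ [ffun _ : 'I_1 => i]) _.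
exact: big_gcd_dvd.
Qed.

Lemma D1_neq0 (p q : nat) (P : 'M[P_]_(p, q)) i j : P i j != 0 -> bigG P != 0.
Proof.
move=> H; apply: (big_gcd_neq0 (i := [ffun _ : 'I_1 => i])).
by apply: (big_gcd_neq0 (i := [ffun _ : 'I_1 => j])); rewrite minor1.
Qed.

Lemma detdiv0 (p q : nat) (P : 'M[P_]_(p, q)) : detdiv P 0 = 1.
Proof.
rewrite /detdiv.
set G := \big[@gcdp F/0]_(f : {ffun 'I_0 -> 'I_p}) _.
have f0 : {ffun 'I_0 -> 'I_p} := ffun0 (card_ord 0).
have g0 : {ffun 'I_0 -> 'I_q} := ffun0 (card_ord 0).
have m1 : forall (f : {ffun 'I_0 -> 'I_p}) (g : {ffun 'I_0 -> 'I_q}), minor P f g = 1.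
  by move=> f g; rewrite /minor det_mx00.
have Gd : G %| 1.
  rewrite -(m1 f0 g0); apply: dvdp_trans (big_gcd_dvd _ f0) _; exact: big_gcd_dvd.
have G0 : G != 0.
  apply: (big_gcd_neq0 (i := f0)); apply: (big_gcd_neq0 (i := g0)).
  by rewrite m1 oner_neq0.
have : size G = 1%N.
  have := dvdp_leq (oner_neq0 _) Gd; rewrite size_poly1 leq_eqVlt ltnS leqn0 size_poly_eq0.
  by rewrite (negbTE G0) orbF => /eqP.
move/eqP/size_poly1P => [c c0 ->].
by rewrite /monicize polyC_eq0 (negbTE c0) lead_coefC -mul_polyC -polyCM mulVf.
Qed.

Lemma monicize_size (g : P_) : size (monicize g) = size g.
Proof.
rewrite /monicize; case: eqP => [->|/eqP g0] //.
by rewrite size_scale // invr_eq0 lead_coef_eq0.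
Qed.

Lemma monicize_root (g : P_) x : root (monicize g) x = root g x.
Proof.
rewrite /monicize; case: eqP => [->|/eqP g0] //.
by rewrite /root hornerZ mulf_eq0 invr_eq0 lead_coef_eq0 (negbTE g0).
Qed.

Lemma inv1 (p q : nat) (P : 'M[P_]_(p, q)) : inv_factor P 1 = monicize (bigG P).
Proof. by rewrite /inv_factor detdiv0 divp1. Qed.

Lemma colnz n (v : 'cV[P_]_n) i : v i 0 != 0 -> v != 0.
Proof. by apply: contraNneq => ->; rewrite mxE. Qed.

Lemma colnzF n (v : 'cV[F]_n) i : v i 0 != 0 -> v != 0.
Proof. by apply: contraNneq => ->; rewrite mxE. Qed.

Lemma col_pencil (p q : nat) (P : 'M[P_]_(p, q)) j0 : is_pencil P -> is_pencil (\col_i P i j0).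
Proof. by move=> Hp i j; rewrite mxE. Qed.

Lemma row_pencil (p q : nat) (P : 'M[P_]_(p, q)) i0 : is_pencil P -> is_pencil (\col_j P i0 j).
Proof. by move=> Hp i j; rewrite mxE. Qed.

Lemma ratio1 (e : P_) : e != 0 -> lead_coef e / lead_coef e != 0.
Proof. by move=> e0; rewrite divff ?oner_neq0 // lead_coef_eq0. Qed.


Lemma k_one (p q : nat) (P : 'M[P_]_(p, q)) k : (nrank P <= 1)%N -> (0 < k <= nrank P)%N -> k = 1%N.
Proof. by case: k => [|[|k]] //; case: (nrank P) => [|[|]]. Qed.

Lemma claim1 (p q : nat) (P : 'M[P_]_(p, q)) :
  is_pencil P -> nrank P = 1%N ->
  has_nontrivial_inv_factor P ->
     exists (u : 'cV[F]_p) (vb : 'cV[F]_q) (ub : 'cV[{poly F}]_p) (v : 'cV[{poly F}]_q),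
       [/\ u != 0, vb != 0, ub != 0 & v != 0] /\ [/\ is_pencil ub, is_pencil v,
           P = map_mx polyC u *m v^T & P = ub *m (map_mx polyC vb)^T].
Proof.
move=> Hp Hr [k [Hk Hs]].
have k1 := k_one (eq_leq Hr) Hk; subst k.
have Hid : rk1 P := rank1_id Hr.
have [i0 [j0 e0]] := rank1_neq0 Hr.
move: Hs; rewrite inv1 monicize_size => Hs.
have Hle := dvdp_leq e0 (D1_dvd P i0 j0).
have Hpe := Hp i0 j0.
have sG : size (bigG P) = 2%N.
  by apply/eqP; rewrite eqn_leq Hs (leq_trans Hle Hpe).
have sE : size (P i0 j0) = 2%N.
  by apply/eqP; rewrite eqn_leq Hpe -sG Hle.
have Hr0 := root2 sG.
have Hall : forall i j, inFe (P i0 j0) (P i j).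
  move=> i j; apply: (F2 sE (root_dvdp (D1_dvd P i0 j0) Hr0) (Hp i j)).
  exact: root_dvdp (D1_dvd P i j) Hr0.
have HA := caseA Hid e0 (fun i => Hall i j0).
have HB := caseB Hid e0 (fun j => Hall i0 j).
exists (\col_i (lead_coef (P i j0) / lead_coef (P i0 j0))),
  (\col_j (lead_coef (P i0 j) / lead_coef (P i0 j0))), (\col_i P i j0), (\col_j P i0 j).
split; last first.
  split; [exact: col_pencil | exact: row_pencil | exact: HA | exact: HB].
split.
- by apply: (colnzF (i := i0)); rewrite mxE ratio1.
- by apply: (colnzF (i := j0)); rewrite mxE ratio1.
- by apply: (colnz (i := i0)); rewrite mxE.
- by apply: (colnz (i := j0)); rewrite mxE.
Qed.


Definition rev1 (y : P_) : P_ := (y`_1)%:P + y`_0 *: 'X.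

Lemma rev1C c y : rev1 (c%:P * y) = c%:P * rev1 y.
Proof.
rewrite /rev1 !coefCM mulrDr polyCM -!mul_polyC polyCM mulrA //.
Qed.

Lemma nrank_le1 (p q : nat) (P : 'M[P_]_(p, q)) (U : 'cV[P_]_p) (V : 'M[P_]_(1, q)) :
  P = U *m V -> (nrank P <= 1)%N.
Proof.
move=> ->; rewrite /nrank map_mxM.
exact: leq_trans (mxrankM_maxl _ _) (rank_leq_col _).
Qed.

Lemma const_of (y : P_) : (size y <= 2)%N -> y`_1 = 0 -> y = (y`_0)%:P.
Proof.
move=> Hs H1; apply/polyP => n; rewrite coefC; case: n => [|[|n]] //=.
by rewrite nth_default // (leq_trans Hs).
Qed.

Lemma claim2 (p q : nat) (P : 'M[P_]_(p, q)) :
  is_pencil P -> nrank P = 1%N ->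
  has_infinite_elem_div P ->
     exists (u : 'cV[F]_p) (v : 'cV[F]_q),
       [/\ u != 0, v != 0 & P = map_mx polyC u *m (map_mx polyC v)^T].
Proof.
move=> Hp Hr [k [Hk Hs]].
have Hid : rk1 P := rank1_id Hr.
have [i0 [j0 e0]] := rank1_neq0 Hr.
have Hrev : forall i j, pencil_rev P i j = rev1 (P i j) by move=> i j; rewrite mxE.
have Hrk : (nrank (pencil_rev P) <= 1)%N.
  case: (dichotP Hp Hid e0) => [HA'|HB'].
    have HA := caseA Hid e0 HA'.
    apply: (nrank_le1 (U := map_mx polyC (\col_i (lead_coef (P i j0) / lead_coef (P i0 j0))))
                      (V := (\col_j rev1 (P i0 j))^T)).
    apply/matrixP => i j; rewrite Hrev {1}HA !mxE big_ord1 !mxE rev1C big_ord1 !mxE //.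
  have HB := caseB Hid e0 HB'.
  apply: (nrank_le1 (U := \col_i rev1 (P i j0))
            (V := (map_mx polyC (\col_j (lead_coef (P i0 j) / lead_coef (P i0 j0))))^T)).
  apply/matrixP => i j; rewrite Hrev {1}HB !mxE big_ord1 !mxE mulrC rev1C mulrC big_ord1 !mxE //.
have k1 := k_one Hrk Hk; subst k.
move: Hs; rewrite inv1 monicize_root => Hs.
have H1 : forall i j, (P i j)`_1 = 0.
  move=> i j; have := root_dvdp (D1_dvd (pencil_rev P) i j) Hs.
  rewrite Hrev /root /rev1 hornerD hornerC hornerZ hornerX mulr0 addr0 => /eqP //.
have Hc : forall i j, P i j = ((P i j)`_0)%:P by move=> i j; apply: const_of.
have sE : size (P i0 j0) = 1%N.
  by move: e0; rewrite Hc polyC_eq0 size_polyC => ->.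
have Hall : forall i, inFe (P i0 j0) (P i j0).
  by move=> i; apply: F1 sE _; rewrite Hc size_polyC leq_b1.
have HA := caseA Hid e0 Hall.
exists (\col_i (lead_coef (P i j0) / lead_coef (P i0 j0))), (\col_j (P i0 j)`_0).
split.
- by apply: (colnzF (i := i0)); rewrite mxE ratio1.
- by apply: (colnzF (i := j0)); rewrite mxE -polyC_eq0 -Hc.
- rewrite {1}HA; congr (_ *m _); congr trmx; apply/matrixP => a b; rewrite !mxE -Hc //.
Qed.


Lemma kerK q (b : 'cV[F]_q) n : b != 0 -> n = (q - 1)%N ->
  exists K : 'M[F]_(q, n), b^T *m K = 0 /\ \rank K = n.
Proof.
move=> b0 ->.
set C := cokermx b^T.
have rC : \rank C^T = (q - 1)%N by rewrite mxrank_tr mxrank_coker rank_rV trmx_eq0 b0.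
have := eq_row_base C^T; have := row_base_free C^T.
move: (row_base C^T); rewrite rC => Y HYf HY.
exists Y^T; split.
  have : (Y <= C^T)%MS by rewrite HY submx_refl.
  case/submxP => D ->; rewrite trmx_mul trmxK mulmxA mulmx_coker mul0mx //.
by rewrite mxrank_tr; apply/eqP.
Qed.

Lemma claim3 (p q : nat) (P : 'M[P_]_(p, q)) :
  is_pencil P -> nrank P = 1%N ->
  has_pos_col_min_index P ->
     exists (u : 'cV[F]_p) (v : 'cV[{poly F}]_q),
       [/\ u != 0, v != 0, is_pencil v & P = map_mx polyC u *m v^T].
Proof.
move=> Hp Hr [B [[HB1 HB2] [j Hj]]].
have Hid : rk1 P := rank1_id Hr.
have [i0 [j0 e0]] := rank1_neq0 Hr.
case: (dichotP Hp Hid e0) => [HA'|HB'].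
  have HA := caseA Hid e0 HA'.
  exists (\col_i (lead_coef (P i j0) / lead_coef (P i0 j0))), (\col_j P i0 j).
  split; [|by apply: (colnz (i := j0)); rewrite mxE|exact: row_pencil|exact: HA].
  by apply: (colnzF (i := i0)); rewrite mxE ratio1.
exfalso.
have HB := caseB Hid e0 HB'.
set beta := \col_j (lead_coef (P i0 j) / lead_coef (P i0 j0)).
have b0 : beta != 0 by apply: (colnzF (i := j0)); rewrite mxE ratio1.
have [K [HK rK]] := kerK b0 (congr1 (subn q) Hr).
have Hbas : @right_poly_basis F p q P (map_mx polyC K).
  split.
    rewrite [X in X *m _]HB -mulmxA map_trmx -map_mxM HK map_mx0 mulmx0 //.
  by rewrite -map_mx_comp mxrank_map.
have := HB2 _ Hbas.
have -> : \sum_j col_deg (map_mx polyC K) j = 0%N.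
  apply: big1 => j' _; rewrite /col_deg; apply: big1 => i _.
  by rewrite mxE size_polyC; case: (K i j' != 0).
rewrite leqn0 => /eqP H0.
by move: Hj; rewrite lt0n; apply/negP; rewrite negbK -leqn0 -H0 (bigD1 j) //= leq_addr.
Qed.


Lemma claim4 (p q : nat) (P : 'M[P_]_(p, q)) :
  is_pencil P -> nrank P = 1%N ->
  has_pos_row_min_index P ->
     exists (v : 'cV[F]_q) (u : 'cV[{poly F}]_p),
       [/\ v != 0, u != 0, is_pencil u & P = u *m (map_mx polyC v)^T].
Proof.
move=> Hp Hr H.
have HpT : is_pencil P^T by move=> i j; rewrite mxE.
have HrT : nrank P^T = 1%N by rewrite /nrank -map_trmx mxrank_tr.
have [u [v [u0 v0 Hv HE]]] := claim3 HpT HrT H.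
exists u, v; split => //.
by rewrite -[P]trmxK HE trmx_mul trmxK.
Qed.

End S.

Unset Implicit Arguments.

Theorem proposition2p1 (F : fieldType) (p q : nat) (P : 'M[{poly F}]_(p, q)) :
  is_pencil P -> nrank P = 1%N ->
  (has_nontrivial_inv_factor P ->
     exists (u : 'cV[F]_p) (vb : 'cV[F]_q) (ub : 'cV[{poly F}]_p) (v : 'cV[{poly F}]_q),
       [/\ u != 0, vb != 0, ub != 0 & v != 0] /\ [/\ is_pencil ub, is_pencil v,
           P = map_mx polyC u *m v^T & P = ub *m (map_mx polyC vb)^T]) /\
  (has_infinite_elem_div P ->
     exists (u : 'cV[F]_p) (v : 'cV[F]_q),
       [/\ u != 0, v != 0 & P = map_mx polyC u *m (map_mx polyC v)^T]) /\
  (has_pos_col_min_index P ->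
     exists (u : 'cV[F]_p) (v : 'cV[{poly F}]_q),
       [/\ u != 0, v != 0, is_pencil v & P = map_mx polyC u *m v^T]) /\
  (has_pos_row_min_index P ->
     exists (v : 'cV[F]_q) (u : 'cV[{poly F}]_p),
       [/\ v != 0, u != 0, is_pencil u & P = u *m (map_mx polyC v)^T]).
Proof.
move=> Hp Hr; split; first exact: claim1.
split; first exact: claim2.
split; first exact: claim3.
exact: claim4.
Qed.
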